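(* Let $n$ be a positive integer, and let $a\in\mathcal{T}_n$ with $\operatorname{rank}(a)=r$. Then (i) $a\mathcal{T}_na\cong\mathcal{T}_r^c$ for some $c\in\mathcal{T}_r$ with $\operatorname{rank}(c)=\operatorname{rank}(a^2)$; (ii) $\mathcal{T}_n^a\cong b\mathcal{T}_{2n-r}b$ for some $b\in\mathcal{T}_{2n-r}$ with $\operatorname{rank}(b)=n$.
   Context: For a positive integer $m$, $\mathcal{T}_m$ denotes the full transformation semigroup on $\{1,\ldots,m\}$: the set of all functions $\{1,\ldots,m\}\to\{1,\ldots,m\}$ under composition (functions are written to the right of their arguments and composed left-to-right). The rank of $f\in\mathcal{T}_m$ is $\operatorname{rank}(f)=|\operatorname{im}(f)|$. For a semigroup $S$ and $a\in S$, the local subsemigroup $aSa=\{axa: x\in S\}$ is a subsemigroup of $S$ (with the operation of $S$), and the variant $S^a$ is the semigroup with underlying set $S$ and operation $x\star_a y=xay$. Isomorphism $\cong$ means semigroup isomorphism. *)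

(* Defs.v *)
From mathcomp Require Import all_boot.
Set Implicit Arguments. Unset Strict Implicit. Unset Printing Implicit Defensive.

(* Full transformation semigroup T_m on {1..m}, represented on 'I_m. *)
Definition trans (m : nat) := {ffun 'I_m -> 'I_m}.

(* Product, functions written on the right: x (f g) = (x f) g. *)
Definition tmul (m : nat) (f g : trans m) : trans m := [ffun x => g (f x)].

Definition trank (m : nat) (f : trans m) : nat := #|[set f x | x : 'I_m]|.

Definition local_sub (m : nat) (a : trans m) : {set trans m} :=
  [set tmul (tmul a x) a | x : trans m].

Definition variant_op (m : nat) (c : trans m) (x y : trans m) : trans m :=
  tmul (tmul x c) y.

Definition sg_iso (T1 T2 : finType) (A : {set T1}) (op1 : T1 -> T1 -> T1)
    (B : {set T2}) (op2 : T2 -> T2 -> T2) : Prop :=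
  exists phi : T1 -> T2,
    [/\ {in A, forall x, phi x \in B},
        {in A &, injective phi},
        {in B, forall y, exists2 x, x \in A & phi x = y}
      & {in A &, forall x y, phi (op1 x y) = op2 (phi x) (phi y)}].

(* Main.v *)
Require Import Defs.
From mathcomp Require Import all_boot zify.

Section Gen.
Variables (N k : nat) (b : trans N) (e : 'I_k -> 'I_N) (einv : 'I_N -> 'I_k).
Hypothesis H1 : cancel e einv.
Hypothesis H2 : forall z, e (einv (b z)) = b z.
Hypothesis Hs : forall j, exists z, b z = e j.

Let p (w : 'I_N) : 'I_N := odflt w [pick z | b z == w].
Lemma H3 j : b (p (e j)) = e j.
Proof.
rewrite /p; case: pickP => [z /eqP //|H].
by have [z Hz] := Hs j; move: (H z); rewrite Hz eqxx.
Qed.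

Definition cc : trans k := [ffun j => einv (b (e j))].
Definition psi (x : trans k) : trans N := [ffun z => e (x (einv (b z)))].
Definition phi (h : trans N) : trans k := [ffun j => einv (h (p (e j)))].

Lemma psi_in x : psi x \in local_sub b.
Proof.
apply/imsetP; exists [ffun w => p (e (x (einv w)))] => //.
apply/ffunP => z; rewrite !ffunE H3 //.
Qed.

Lemma psiK h : h \in local_sub b -> psi (phi h) = h.
Proof.
case/imsetP => x _ ->; apply/ffunP => z; rewrite !ffunE H3 H2 H2 //.
Qed.

Lemma phiK x : phi (psi x) = x.
Proof. apply/ffunP => j; rewrite !ffunE H3 !H1 //. Qed.

Lemma psiM x y : psi (variant_op cc x y) = tmul (psi x) (psi y).
Proof. apply/ffunP => z; rewrite !ffunE //. Qed.

Lemma gen_iso1 : sg_iso [set: trans k] (variant_op cc) (local_sub b) (@tmul N).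
Proof.
exists psi; split.
- by move=> x _; apply: psi_in.
- by move=> x y _ _ E; rewrite -(phiK x) E phiK.
- by move=> h Hh; exists (phi h); rewrite ?inE ?psiK.
- by move=> x y _ _; apply: psiM.
Qed.

Lemma gen_iso2 : sg_iso (local_sub b) (@tmul N) [set: trans k] (variant_op cc).
Proof.
exists phi; split.
- by move=> x _; rewrite inE.
- by move=> x y Hx Hy E; rewrite -(psiK _ Hx) E psiK.
- by move=> x _; exists (psi x); rewrite ?psi_in ?phiK.
- move=> x y Hx Hy; rewrite -(psiK _ Hx) -(psiK _ Hy) -psiM !phiK //.
Qed.
End Gen.

Lemma part1 (n : nat) (a : trans n) : 0 < n ->
  (exists c : trans (trank a),
      trank c = trank (tmul a a) /\
      sg_iso (local_sub a) (@tmul n) [set: trans (trank a)] (variant_op c)).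
Proof.
move=> n0.
set I := [set a x | x : 'I_n].
have I0 : a (Ordinal n0) \in I by apply: imset_f.
pose e : 'I_(trank a) -> 'I_n := enum_val.
pose einv : 'I_n -> 'I_(trank a) := enum_rank_in I0.
have H1 : cancel e einv by apply: enum_valK_in.
have H2 : forall z, e (einv (a z)) = a z.
  by move=> z; apply: (enum_rankK_in I0); apply: imset_f.
have Hs : forall j, exists z, a z = e j.
  move=> j; have : e j \in I by apply: enum_valP.
  by case/imsetP => z _ ->; exists z.
exists (@cc _ _ a e einv); split; last exact: gen_iso2.
rewrite /trank.
have -> : [set @cc _ _ a e einv x | x : 'I_(trank a)] = [set einv y | y in [set tmul a a x | x : 'I_n]].
  apply/setP => y; apply/imsetP/imsetP.
  - case=> j _ ->; have [z Hz] := Hs j.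
    exists (tmul a a z); first by apply: imset_f.
    by rewrite !ffunE Hz.
  - case=> w Hw ->; case/imsetP: Hw => x _ ->; exists (einv (a x)) => //.
    by rewrite !ffunE H2.
rewrite card_in_imset // => u v /imsetP [x _ ->] /imsetP [y _ ->] E.
by move: E; rewrite !ffunE => E; rewrite -H2 E H2.
Qed.

Lemma part2 (n : nat) (a : trans n) : 0 < n ->
  (exists b : trans (2 * n - trank a),
      trank b = n /\
      sg_iso [set: trans n] (variant_op a) (local_sub b) (@tmul (2 * n - trank a))).
Proof.
move=> n0.
set I := [set a x | x : 'I_n].
have rn : trank a <= n by have := max_card (mem I); rewrite card_ord.
set N := 2 * n - trank a.
have leNN : n <= N by rewrite /N; lia.
pose e (j : 'I_n) : 'I_N := widen_ord leNN j.
pose einv (z : 'I_N) : 'I_n := insubd (Ordinal n0) (val z).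
have H1 : cancel e einv by move=> j; apply: val_inj; rewrite /einv val_insubd /= ltn_ord.
pose g (z : 'I_N) : 'I_n := if val z < n then a (einv z) else nth (Ordinal n0) (enum (~: I)) (val z - n).
pose b : trans N := [ffun z => e (g z)].
have H2 : forall z, e (einv (b z)) = b z by move=> z; rewrite ffunE H1.
have ge : forall j, g (e j) = a j by move=> j; rewrite /g /= ltn_ord H1.
have Hs : forall j, exists z, b z = e j.
  move=> j; case: (boolP (j \in I)).
  - by case/imsetP => x _ ->; exists (e x); rewrite ffunE ge.
  - move=> jI.
    have ji : j \in enum (~: I) by rewrite mem_enum inE.
    have hi : index j (enum (~: I)) < size (enum (~: I)) by rewrite index_mem.
    have hs : size (enum (~: I)) = n - trank a.
      rewrite -cardE; have HH := cardsC I; rewrite card_ord in HH; change (trank a) with #|I|; lia.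
    have hz : n + index j (enum (~: I)) < N by rewrite /N; lia.
    exists (Ordinal hz); rewrite ffunE /g /=.
    have -> : n + index j (enum (~: I)) < n = false by lia.
    by rewrite addKn nth_index.
have ca : @cc _ _ b e einv = a by apply/ffunP => j; rewrite !ffunE H1 ge.
exists b; split; last by rewrite -ca; apply: gen_iso1.
rewrite /trank.
have -> : [set b z | z : 'I_N] = [set e j | j : 'I_n].
  apply/setP => y; apply/imsetP/imsetP.
  - by case=> z _ ->; exists (g z) => //; rewrite ffunE.
  - by case=> j _ ->; have [z Hz] := Hs j; exists z.
rewrite card_imset ?card_ord //; move=> x y E; apply: val_inj; exact: (congr1 val E).
Qed.

Theorem theorem1p4 (n : nat) (a : trans n) : 0 < n ->
  (exists c : trans (trank a),
      trank c = trank (tmul a a) /\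
      sg_iso (local_sub a) (@tmul n) [set: trans (trank a)] (variant_op c))
  /\
  (exists b : trans (2 * n - trank a),
      trank b = n /\
      sg_iso [set: trans n] (variant_op a) (local_sub b) (@tmul (2 * n - trank a))).
Proof. by move=> n0; split; [apply: part1 | apply: part2]. Qed.
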